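(* Let $L$ be a frame and for $a\in L$ write $\mathfrak c_f(a)=\{x\in L\mid x\vee a=1\}$. Then: (1) $L$ is subfit if and only if for every $a\in L$ the supplement of $\mathfrak c_f(a)$ in $\mathsf{Filt}(L)$ equals ${\uparrow}a$, i.e. $\{b\in L\mid\forall x\in\mathfrak c_f(a),\ b\vee x=1\}={\uparrow}a$; (2) $L$ is a Boolean algebra if and only if for every $a\in L$, ${\uparrow}a\sqcap\mathfrak c_f(a)=L$, i.e. $\{f\wedge g\mid f\in{\uparrow}a,\ g\in\mathfrak c_f(a)\}=L$.
   Context: A frame is a complete lattice $L$ with $(\bigvee A)\wedge b=\bigvee_{a\in A}(a\wedge b)$. $L$ is subfit if for all $a,b$: whenever ($\forall c$, $a\vee c=1\Rightarrow b\vee c=1$) then $a\le b$. $\mathsf{Filt}(L)$ is the set of filters (nonempty up-closed subsets closed under finite meets) ordered by reverse inclusion $\sqsubseteq$; it is a coframe with least element $L$, greatest element $\{1\}$, binary meet $F\sqcap G=\{f\wedge g\mid f\in F,g\in G\}$, difference $H\setminus G=\{a\mid\forall b\in G,\ b\vee a\in H\}$, and supplement $F^\#=\{1\}\setminus F$. *)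

(* Defs.v *)
From HB Require Import structures.
From mathcomp Require Import all_boot all_order.
Set Implicit Arguments. Unset Strict Implicit. Unset Printing Implicit Defensive.
Import Order.TTheory.
Local Open Scope order_scope.

Definition pset (T : Type) := T -> Prop.
Definition pset_eq (T : Type) (A B : pset T) := forall x, A x <-> B x.

Section Frames.
Context {disp : Order.disp_t} {L : tbDistrLatticeType disp}.

Definition is_frame (sup : pset L -> L) : Prop :=
  [/\ (forall (A : pset L) x, A x -> x <= sup A),
      (forall (A : pset L) y, (forall x, A x -> x <= y) -> sup A <= y) &
      (forall (A : pset L) b,
          sup A `&` b = sup (fun c => exists2 a, A a & c = a `&` b))].

Definition subfit : Prop :=
  forall a b : L, (forall c, a `|` c = \top -> b `|` c = \top) -> a <= b.

Definition boolean_lattice : Prop :=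
  forall a : L, exists b : L, a `&` b = \bot /\ a `|` b = \top.

Definition is_filter (F : pset L) : Prop :=
  [/\ exists x, F x,
      (forall x y, F x -> x <= y -> F y) &
      (forall x y, F x -> F y -> F (x `&` y))].

Definition upset (a : L) : pset L := fun x => a <= x.
Definition cf (a : L) : pset L := fun x => x `|` a = \top.
Definition filt_top : pset L := fun x => x = \top.

(* operations of the coframe Filt(L) (ordered by reverse inclusion) *)
Definition filt_meet (F G : pset L) : pset L :=
  fun c => exists f g, [/\ F f, G g & c = f `&` g].
Definition filt_diff (H G : pset L) : pset L :=
  fun a => forall b, G b -> H (b `|` a).
Definition filt_supp (F : pset L) : pset L := filt_diff filt_top F.
Definition filt_full : pset L := fun _ => True.

End Frames.

(* Main.v *)
Require Import Defs.
From HB Require Import structures.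
From mathcomp Require Import all_boot all_order.
Import Order.TTheory.
Local Open Scope order_scope.

Theorem mainTheorem19 (disp : Order.disp_t) (L : tbDistrLatticeType disp)
    (sup : pset L -> L) (Hframe : is_frame sup) :
  (subfit (L := L) <-> forall a : L, pset_eq (filt_supp (cf a)) (upset a)) /\
  (boolean_lattice (L := L) <->
     forall a : L, pset_eq (filt_meet (upset a) (cf a)) filt_full).
Proof.
split; split.
- move=> Hs a b; split.
  + move=> Hb; apply: Hs => c hc; rewrite joinC; apply: Hb; rewrite /cf joinC.
    exact: hc.
  + rewrite /upset /filt_supp /filt_diff /filt_top /cf => hab x hx.
    apply/eqP; rewrite eq_le lex1 /= -hx; apply: leU2 => //.
- move=> H a b hab; apply/(H a b) => x hx; rewrite /filt_top joinC.
  apply: hab; rewrite joinC; exact: hx.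
- move=> Hb a c; split => // _.
  have [a' [h1 h2]] := Hb a.
  exists (a `|` c), (a' `|` c); split.
  + exact: leUl.
  + rewrite /cf -joinA (joinC c a) joinA (joinC a' a) h2.
    by rewrite joinC joinx1.
  + by rewrite -joinIl h1 join0x.
- move=> H a.
  have [f [g [hf hg e]]] := proj2 (H a \bot) I.
  exists g; split.
  + apply/eqP; rewrite eq_le le0x andbT e; apply: leI2 => //.
  + by rewrite joinC.
Qed.
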